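(* Let $k\ge 2$ be an integer and let $R$ and $B$ be disjoint finite sets of points in the plane such that no three points of $R\cup B$ are collinear. If $2\le |B|\le (k-2)|R|+2$, then there exists a non-crossing geometric spanning tree $T$ on $R\cup B$ such that the set of leaves of $T$ is exactly $B$ and the maximum degree of $T$ is at most $k$. Moreover, if $|B|=(k-2)|R|+2$, then $T$ satisfies $\deg_T(x)=k$ for every $x\in R$.
   Context: A geometric spanning tree on a point set $P$ is a tree with vertex set $P$ whose edges are drawn as straight-line segments between their endpoints; it is non-crossing if no two edges intersect except at a common endpoint. $\deg_T(v)$ denotes the degree of vertex $v$ in $T$, and a leaf is a vertex of degree one. *)

(* Defs.v *)
From HB Require Import structures.
From mathcomp Require Import all_boot all_order all_algebra.
From mathcomp Require Import reals.
Set Implicit Arguments. Unset Strict Implicit. Unset Printing Implicit Defensive.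
Import Order.TTheory GRing.Theory Num.Theory.
Local Open Scope ring_scope.

Definition in_segment (R : realType) (a b z : R * R) : Prop :=
  exists t : R, 0 <= t /\ t <= 1 /\
    z = ((1 - t) * a.1 + t * b.1, (1 - t) * a.2 + t * b.2).

Definition collinear (R : realType) (a b c : R * R) : Prop :=
  (b.1 - a.1) * (c.2 - a.2) - (b.2 - a.2) * (c.1 - a.1) = 0.

Definition no_three_collinear (R : realType) (n : nat) (p : 'I_n -> R * R) : Prop :=
  forall i j l : 'I_n, i != j -> j != l -> i != l -> ~ collinear (p i) (p j) (p l).

Definition simple_graph (n : nat) (e : rel 'I_n) : Prop :=
  irreflexive e /\ symmetric e.

Definition connected_graph (n : nat) (e : rel 'I_n) : Prop :=
  forall x y : 'I_n, connect e x y.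

Definition acyclic_graph (n : nat) (e : rel 'I_n) : Prop :=
  forall s : seq 'I_n, uniq s -> (3 <= size s)%N -> ~~ cycle e s.

Definition is_tree (n : nat) (e : rel 'I_n) : Prop :=
  simple_graph e /\ connected_graph e /\ acyclic_graph e.

Definition deg (n : nat) (e : rel 'I_n) (x : 'I_n) : nat := #|[set y | e x y]|.

Definition non_crossing (R : realType) (n : nat) (p : 'I_n -> R * R)
    (e : rel 'I_n) : Prop :=
  forall a b c d : 'I_n, e a b -> e c d ->
    ~ ((a = c /\ b = d) \/ (a = d /\ b = c)) ->
    forall z : R * R, in_segment (p a) (p b) z -> in_segment (p c) (p d) z ->
      exists v : 'I_n, (v = a \/ v = b) /\ (v = c \/ v = d) /\ z = p v.

(* Main.v *)
Require Import Defs.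
From HB Require Import structures.
From mathcomp Require Import all_boot all_order all_algebra.
From mathcomp Require Import reals.
From mathcomp Require Import ring lra zify.
Set Implicit Arguments. Unset Strict Implicit. Unset Printing Implicit Defensive.
Import Order.TTheory GRing.Theory Num.Theory.
Local Open Scope ring_scope.

Section Geo.
Variables (R : realType) (n : nat) (p : 'I_n -> R * R).
Hypothesis p_inj : injective p.
Hypothesis p_gen : no_three_collinear p.

Definition orient (a b c : R * R) : R :=
  (b.1 - a.1) * (c.2 - a.2) - (b.2 - a.2) * (c.1 - a.1).
Definition lexlt (a b : R * R) : bool := (a.1 < b.1) || ((a.1 == b.1) && (a.2 < b.2)).

Lemma orient_trans h a b c : lexlt h a -> lexlt h b -> lexlt h c ->
  0 < orient h a b -> 0 < orient h b c -> 0 < orient h a c.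
Proof.
rewrite /lexlt /orient.
case: h a b c => [h1 h2] [a1 a2] [b1 b2] [c1 c2] /=.
by case/orP=> [Ha|/andP[/eqP Ha Ha']]; case/orP=> [Hb|/andP[/eqP Hb Hb']];
   case/orP=> [Hc|/andP[/eqP Hc Hc']] Hab Hbc; nra.
Qed.

Lemma orient_swap h a b : orient h b a = - orient h a b.
Proof. rewrite /orient; ring. Qed.

Lemma orient_xx1 (a b : R * R) : orient a b a = 0.
Proof. rewrite /orient; ring. Qed.

Lemma orient_xx2 (a b : R * R) : orient a b b = 0.
Proof. rewrite /orient; ring. Qed.

Lemma orient_nz i j l : i != j -> j != l -> i != l -> orient (p i) (p j) (p l) != 0.
Proof. by move=> ij jl il; apply/eqP; apply: (p_gen ij jl il). Qed.

Lemma seg_gen i j l : in_segment (p i) (p j) (p l) -> l = i \/ l = j.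
Proof.
case=> t [t0 [t1 E]].
have [/eqP ij|ij] := boolP (i == j).
  subst j; left; apply: p_inj; rewrite E.
  case: (p i) => a1 a2 /=; congr pair; ring.
have [/eqP li|li] := boolP (l == i); first by left.
have [/eqP lj|lj] := boolP (l == j); first by right.
exfalso.
have jl : j != l by rewrite eq_sym.
have il : i != l by rewrite eq_sym.
move: (orient_nz ij jl il) => /eqP; apply; rewrite E /orient /=; ring.
Qed.

Definition aff (s : R) (A B z : R * R) := s * orient A B z.

Lemma aff_seg s A B (a b : R * R) t :
  aff s A B ((1 - t) * a.1 + t * b.1, (1 - t) * a.2 + t * b.2) =
  (1 - t) * aff s A B a + t * aff s A B b.
Proof. rewrite /aff /orient /=; ring. Qed.

Lemma sep (S1 S2 : seq 'I_n) c s A B :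
  (forall x, x \in S1 -> aff s A B (p x) <= 0) ->
  (forall x, x \in S2 -> 0 <= aff s A B (p x)) ->
  (forall x, x \in S2 -> aff s A B (p x) = 0 -> x = c) ->
  forall a b u v z, a \in S2 -> b \in S2 -> a != b -> u \in S1 -> v \in S1 ->
  in_segment (p a) (p b) z -> in_segment (p u) (p v) z ->
  z = p c /\ (c = a \/ c = b) /\ (c = u \/ c = v).
Proof.
move=> H1 H2 H2s a b u v z aS bS ab uS vS [t [t0 [t1 Ez]]] [t' [t0' [t1' Ez']]].
have fa := H2 a aS; have fb := H2 b bS; have fu := H1 u uS; have fv := H1 v vS.
have hz1 := aff_seg s A B (p a) (p b) t; rewrite -Ez in hz1.
have hz2 := aff_seg s A B (p u) (p v) t'; rewrite -Ez' in hz2.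
have fz : aff s A B z = 0 by nra.
have zc : z = p c.
  have [tl1|] := boolP (t < 1); last first.
    rewrite -leNgt => t1'' ; have tt : t = 1 by apply/le_anti; rewrite t1 t1''.
    subst t; have fb0 : aff s A B (p b) = 0 by lra.
    rewrite (H2s b bS fb0) in Ez *; rewrite Ez; case: (p c) => ?? /=; congr pair; ring.
  have fa0 : aff s A B (p a) = 0 by nra.
  have ac := H2s a aS fa0.
  have [tg0|] := boolP (0 < t).
    have fb0 : aff s A B (p b) = 0 by nra.
    have bc := H2s b bS fb0.
    by move: ab; rewrite ac bc eqxx.
  rewrite -leNgt => t0'' ; have tt : t = 0 by apply/le_anti; rewrite t0 t0''.
  subst t; rewrite Ez -ac; case: (p a) => ?? /=; congr pair; ring.
have cab : c = a \/ c = b by apply: seg_gen; rewrite -zc; exists t.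
have cuv : c = u \/ c = v by apply: seg_gen; rewrite -zc; exists t'.
by [].
Qed.
End Geo.

Section Trees.
Variable n : nat.
Implicit Types (S : seq 'I_n) (e : rel 'I_n).

Definition tedge S (rho : 'I_n) (par : 'I_n -> 'I_n) : rel 'I_n :=
  fun x y => [&& x \in S, y \in S &
     ((x != rho) && (par x == y)) || ((y != rho) && (par y == x))].

Definition rtree S rho e := rho \in S /\ exists par (dep : 'I_n -> nat),
  (forall x, x \in S -> x != rho -> par x \in S /\ (dep (par x) < dep x)%N)
  /\ e =2 tedge S rho par.

Lemma rtree_sub S rho e x y : rtree S rho e -> e x y -> x \in S /\ y \in S.
Proof. by case=> _ [par [dep [_ E]]]; rewrite E => /and3P[]. Qed.

Lemma rtree_irr S rho e : rtree S rho e -> irreflexive e.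
Proof.
case=> _ [par [dep [H E]]] x; rewrite E /tedge; apply/negP => /and3P[xS _].
rewrite orbb => /andP[xr /eqP px].
by have [_] := H x xS xr; rewrite px ltnn.
Qed.

Lemma rtree_sym S rho e : rtree S rho e -> symmetric e.
Proof.
case=> _ [par [dep [H E]]] x y; rewrite !E /tedge.
by rewrite andbCA orbC.
Qed.

Lemma rtree_ext S S' rho e : S =i S' -> rtree S rho e -> rtree S' rho e.
Proof.
move=> eS [rS [par [dep [H E]]]]; split; first by rewrite -eS.
exists par, dep; split.
  by move=> x; rewrite -!eS; apply: H.
by move=> x y; rewrite E /tedge !eS.
Qed.

Lemma rtree_union S1 S2 rho c e1 e2 :
  rtree S1 rho e1 -> rtree S2 c e2 -> c \in S1 ->
  (forall x, x \in S1 -> x \in S2 -> x = c) ->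
  rtree (S1 ++ S2) rho (fun x y => e1 x y || e2 x y).
Proof.
move=> [rS1 [par1 [dep1 [H1 E1]]]] [cS2 [par2 [dep2 [H2 E2]]]] cS1 I12.
split; first by rewrite mem_cat rS1.
have rS2 : rho \in S2 -> rho = c by apply: I12.
exists (fun x => if x \in S1 then par1 x else par2 x).
exists (fun x => if x \in S1 then dep1 x else (dep1 c + dep2 x).+1)%N.
split.
  move=> x; rewrite mem_cat; case xS1: (x \in S1) => /=.
    move=> _ xr.
    by have [pS dp] := H1 x xS1 xr; rewrite pS mem_cat pS.
  move=> xS2 xr.
  have xc : x != c by apply/eqP => xc; rewrite xc cS1 in xS1.
  have [pS dp] := H2 x xS2 xc; rewrite mem_cat pS orbT; split => //.
  case pS1: (par2 x \in S1).
    by rewrite (I12 _ pS1 pS) ltnS leq_addr.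
  by rewrite ltnS ltn_add2l.
move=> x y; rewrite E1 E2 /tedge !mem_cat.
case xS1: (x \in S1); case yS1: (y \in S1) => /=.
- case xS2: (x \in S2); case yS2: (y \in S2) => //=; rewrite ?orbF //.
  by rewrite (I12 x xS1 xS2) (I12 y yS1 yS2) eqxx /= orbF.
- have yr : y != rho by apply/eqP => yr; rewrite yr rS1 in yS1.
  have yc : y != c by apply/eqP => yc; rewrite yc cS1 in yS1.
  rewrite yr yc /=.
  have -> : (x != rho) && (par1 x == y) = false.
    apply/negbTE/negP => /andP[xr /eqP py].
    by have [pS _] := H1 x xS1 xr; rewrite py yS1 in pS.
  case xS2: (x \in S2) => /=.
    have xc := I12 x xS1 xS2; subst x; by rewrite eqxx.
  case yS2: (y \in S2) => //=; apply/esym/negbTE/negP => /eqP px.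
  by have [pS _] := H2 y yS2 yc; rewrite px xS2 in pS.
- have xr : x != rho by apply/eqP => xr; rewrite xr rS1 in xS1.
  have xc : x != c by apply/eqP => xc; rewrite xc cS1 in xS1.
  rewrite xr xc /=.
  have -> : (y != rho) && (par1 y == x) = false.
    apply/negbTE/negP => /andP[yr /eqP py].
    by have [pS _] := H1 y yS1 yr; rewrite py xS1 in pS.
  rewrite orbF.
  case yS2: (y \in S2) => /=.
    have yc := I12 y yS1 yS2; subst y; by rewrite eqxx /= orbF.
  rewrite andbF; apply/esym/negbTE/negP => /andP[xS2 /eqP px].
  by have [pS _] := H2 x xS2 xc; rewrite px yS2 in pS.
- have xr : x != rho by apply/eqP => xr; rewrite xr rS1 in xS1.
  have xc : x != c by apply/eqP => xc; rewrite xc cS1 in xS1.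
  have yr : y != rho by apply/eqP => yr; rewrite yr rS1 in yS1.
  have yc : y != c by apply/eqP => yc; rewrite yc cS1 in yS1.
  by rewrite xr xc yr yc.
Qed.


Lemma deg_union e1 e2 x : (forall y, ~~ (e1 x y && e2 x y)) ->
  deg (fun x y => e1 x y || e2 x y) x = (deg e1 x + deg e2 x)%N.
Proof.
move=> D; rewrite /deg.
have -> : [set y | e1 x y || e2 x y] = [set y | e1 x y] :|: [set y | e2 x y].
  by apply/setP => y; rewrite !inE.
rewrite cardsU.
have -> : [set y | e1 x y] :&: [set y | e2 x y] = set0.
  by apply/setP => y; rewrite !inE; apply/negbTE/D.
by rewrite cards0 subn0.
Qed.

Lemma deg_zero e x : (forall y, ~~ e x y) -> deg e x = 0%N.
Proof.
move=> D; rewrite /deg; have -> : [set y | e x y] = set0.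
  by apply/setP => y; rewrite !inE; apply/negbTE/D.
by rewrite cards0.
Qed.

Lemma rtree_is_tree S rho e : rtree S rho e -> (forall x, x \in S) -> is_tree e.
Proof.
move=> T allS.
have irr := rtree_irr T; have sym := rtree_sym T.
case: T => rS [par [dep [H E]]].
split; first by split.
split.
  have toroot : forall x, connect e x rho.
    move=> x; elim: {x}(dep x).+1 {-2}x (ltnSn (dep x)) => // m IH x dx.
    have [/eqP ->|xr] := boolP (x == rho); first exact: connect0.
    have [pS dp] := H x (allS x) xr.
    apply: (connect_trans (connect1 _)); last first.
      by apply: IH; apply: leq_trans dp _.
    by rewrite E /tedge allS pS xr eqxx.
  move=> x y; apply: (connect_trans (toroot x)).
  by rewrite (sym_connect_sym sym) toroot.
move=> s us ss; apply/negP => cs.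
case: s us ss cs => [|z0 s0] // us ss cs.
have z0s : z0 \in z0 :: s0 by rewrite inE eqxx.
case: (@arg_maxnP _ z0 (mem (z0 :: s0)) dep z0s) => x xs xmax.
case: (rot_to xs) => i s1 Er.
have us1 : uniq (x :: s1) by rewrite -Er rot_uniq.
have cs1 : cycle e (x :: s1) by rewrite -Er rot_cycle.
have ss1 : (3 <= size (x :: s1))%N by rewrite -Er size_rot.
have mem1 : forall y, y \in x :: s1 -> (dep y <= dep x)%N.
  by move=> y; rewrite -Er mem_rot => /xmax.
clear Er.
case: s1 us1 cs1 ss1 mem1 => [|a [|b t]] // us1 cs1 ss1 mem1.
move: cs1; rewrite /= rcons_path => /and4P[exa _ _ ezx].
set z := last b t in ezx.
have zbt : z \in b :: t by rewrite /z mem_last.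
have az : a != z.
  apply/eqP => az; move: us1; rewrite /= -az in zbt.
  by rewrite /= zbt andbF.
have xa : par x = a.
  move: exa; rewrite E /tedge => /and3P[_ _ /orP[/andP[_ /eqP //]|/andP[ar /eqP pa]]].
  have [_ dp] := H a (allS a) ar; rewrite pa in dp.
  by have := mem1 a; rewrite !inE eqxx orbT => /(_ isT); rewrite leqNgt dp.
have xz : par x = z.
  move: ezx; rewrite E /tedge => /and3P[_ _ /orP[/andP[zr /eqP pz]|/andP[_ /eqP //]]].
  have [_ dp] := H z (allS z) zr; rewrite pz in dp.
  have zin : z \in [:: x, a, b & t] by rewrite in_cons (in_cons a) zbt !orbT.
  by have := mem1 z zin; rewrite leqNgt dp.
by move: az; rewrite -xa -xz eqxx.
Qed.
End Trees.


Section Disc.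
Local Open Scope nat_scope.
Variable T : eqType.
Variable d : T -> nat.

Definition Dp (t : seq T) i := \sum_(x <- take i t) d x.

Lemma Dp0 t : Dp t 0 = 0.
Proof. by rewrite /Dp take0 big_nil. Qed.

Lemma DpS t i (x0 : T) : i < size t -> Dp t i.+1 = Dp t i + d (nth x0 t i).
Proof. by move=> it; rewrite /Dp (take_nth x0 it) -cats1 big_cat big_seq1. Qed.

Lemma Dp_size t : Dp t (size t) = \sum_(x <- t) d x.
Proof. by rewrite /Dp take_size. Qed.

Lemma Dp_mono t i (x0 : T) : (forall x, x \in t -> 0 < d x) -> i < size t ->
  Dp t i < Dp t i.+1.
Proof.
move=> pos it; rewrite (DpS x0 it) -addn1 leq_add2l; apply: pos; exact: mem_nth.
Qed.

Lemma split_ge2 t (x0 : T) : (forall x, x \in t -> 0 < d x) ->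
  Dp t (size t) + 2 <= 2 * size t ->
  exists i, [/\ 0 < i, i < size t & Dp t i + 1 = 2 * i].
Proof.
move=> pos Hm; set m := size t in Hm *; have mt : size t = m by []; clearbody m.
have ex : exists i, (Dp t i + 1 <= 2 * i) && (i <= m).
  by exists m; rewrite leqnn andbT; lia.
case: (ex_minnP ex) => i /andP[Hi im] imin.
have i0 : 0 < i by move: Hi; case: i {imin im} => //; rewrite Dp0.
case: i i0 Hi im imin => // j _ Hj jm jmin.
have jt : j < size t by rewrite mt.
have Hlt := Dp_mono x0 pos jt.
have nj : ~~ ((Dp t j + 1 <= 2 * j) && (j <= m)).
  by apply/negP => /jmin; rewrite ltnn.
move: nj; rewrite (ltnW jm) andbT -ltnNge => nj.
have Eq : Dp t j.+1 + 1 = 2 * j.+1 by lia.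
exists j.+1; split => //.
rewrite ltn_neqAle jm andbT; apply/eqP => E; move: Eq; rewrite E; lia.
Qed.

Lemma split_eq1 t (x0 : T) : (forall x, x \in t -> 0 < d x) -> 2 <= size t ->
  Dp t (size t) + 1 = 2 * size t ->
  (exists i, [/\ i.+1 < size t, Dp t i <= 2 * i & 2 * i.+1 <= Dp t i.+1])
  \/ 2 <= d (nth x0 t (size t).-1).
Proof.
move=> pos m2 Hm; set m := size t in m2 Hm *.
case: (leqP 2 (d (nth x0 t m.-1))) => Hl; [by right | left].
have Hm1 : 2 * m.-1 <= Dp t m.-1.
  have := DpS x0 (_ : m.-1 < size t); rewrite prednK ?(ltn_trans _ m2) // => /(_ (leqnn _)).
  lia.
case: (leqP 2 (Dp t 1)) => H1.
  by exists 0; rewrite Dp0; split => //; lia.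
have ex : exists i, (0 < i) && (2 * i <= Dp t i).
  by exists m.-1; rewrite Hm1 andbT; lia.
case: (ex_minnP ex) => i /andP[i0 Hi] imin.
have im : i <= m.-1 by apply: imin; rewrite Hm1 andbT; lia.
case: i i0 Hi im imin => // j _ Hj jm jmin.
case: j Hj jm jmin => [|j] Hj jm jmin; first by lia.
have nj : ~~ ((0 < j.+1) && (2 * j.+1 <= Dp t j.+1)).
  by apply/negP => /jmin; rewrite ltnn.
move: nj; rewrite /= -ltnNge => nj.
exists j.+1; split => //; [lia | lia].
Qed.
End Disc.

Section Fill.
Local Open Scope nat_scope.
Variable T : eqType.

Lemma fill (s : seq T) c E : uniq s -> E <= c * size s ->
  exists g : T -> nat, (forall x, g x <= c) /\ \sum_(x <- s) g x = E.
Proof.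
elim: s E => [|a s IH] E /=.
  by move=> _; rewrite muln0 leqn0 => /eqP->; exists (fun _ => 0); rewrite big_nil.
case/andP => an us HE.
have HE' : E - minn c E <= c * size s by rewrite mulnS in HE; lia.
have [g [gc gs]] := IH _ us HE'.
exists (fun x => if x == a then minn c E else g x); split.
  by move=> x; case: (x == a); rewrite ?geq_minl.
rewrite big_cons eqxx.
have -> : \sum_(x <- s) (if x == a then minn c E else g x) = \sum_(x <- s) g x.
  apply: eq_big_seq => x xs; case: eqP => // xa; move: an; rewrite -xa xs.
  by [].
rewrite gs; lia.
Qed.

Lemma sum_le (s : seq T) c (g : T -> nat) : (forall x, g x <= c) ->
  \sum_(x <- s) g x <= c * size s.
Proof.
move=> gc; elim: s => [|a s IH]; first by rewrite big_nil.
by rewrite big_cons /= mulnS leq_add.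
Qed.

Lemma fill_full (s : seq T) c (g : T -> nat) : (forall x, g x <= c) ->
  \sum_(x <- s) g x = c * size s -> forall x, x \in s -> g x = c.
Proof.
move=> gc; elim: s => [|a s IH] //=.
rewrite big_cons mulnS => E x; rewrite inE => /orP[/eqP->|xs].
  have := sum_le s gc; have := gc a; lia.
apply: IH => //; have := sum_le s gc; have := gc a; lia.
Qed.
End Fill.

Section Main.
Variables (R : realType) (n : nat) (p : 'I_n -> R * R).
Hypothesis p_inj : injective p.
Hypothesis p_gen : no_three_collinear p.

Definition Gsep (Sa Sb : seq 'I_n) (c : 'I_n) := exists s A B,
  [/\ (forall x, x \in Sa -> aff s A B (p x) <= 0),
      (forall x, x \in Sb -> 0 <= aff s A B (p x)) &
      (forall x, x \in Sb -> aff s A B (p x) = 0 -> x = c)].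

Lemma Gsep_cross Sa Sb c : Gsep Sa Sb c ->
  forall a b u v z, a \in Sb -> b \in Sb -> a != b -> u \in Sa -> v \in Sa ->
  in_segment (p a) (p b) z -> in_segment (p u) (p v) z ->
  exists w, (w = a \/ w = b) /\ (w = u \/ w = v) /\ z = p w.
Proof.
case=> s [A [B [H1 H2 H3]]] a b u v z aS bS ab uS vS za zu.
have [zc [cab cuv]] := sep p_inj p_gen H1 H2 H3 aS bS ab uS vS za zu.
by exists c.
Qed.

Lemma nc_union S1 S2 rho1 rho2 c e1 e2 :
  rtree S1 rho1 e1 -> rtree S2 rho2 e2 ->
  non_crossing p e1 -> non_crossing p e2 ->
  Gsep S1 S2 c \/ Gsep S2 S1 c ->
  non_crossing p (fun x y => e1 x y || e2 x y).
Proof.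
move=> T1 T2 N1 N2 G a b u v /orP[ab1|ab2] /orP[uv1|uv2] neq z za zu.
- exact: N1 ab1 uv1 neq z za zu.
- have [aS bS] := rtree_sub T1 ab1; have [uS vS] := rtree_sub T2 uv2.
  have ab : a != b by apply/eqP => ab; rewrite ab (rtree_irr T1) in ab1.
  have uv : u != v by apply/eqP => uv; rewrite uv (rtree_irr T2) in uv2.
  case: G => G.
    have [w [H1 [H2 H3]]] := Gsep_cross G uS vS uv aS bS zu za.
    by exists w.
  have [w [H1 [H2 H3]]] := Gsep_cross G aS bS ab uS vS za zu.
  by exists w.
- have [aS bS] := rtree_sub T2 ab2; have [uS vS] := rtree_sub T1 uv1.
  have ab : a != b by apply/eqP => ab; rewrite ab (rtree_irr T2) in ab2.
  have uv : u != v by apply/eqP => uv; rewrite uv (rtree_irr T1) in uv1.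
  case: G => G; last first.
    have [w [H1 [H2 H3]]] := Gsep_cross G uS vS uv aS bS zu za.
    by exists w.
  have [w [H1 [H2 H3]]] := Gsep_cross G aS bS ab uS vS za zu.
  by exists w.
- exact: N2 ab2 uv2 neq z za zu.
Qed.

Definition good (S : seq 'I_n) (d : 'I_n -> nat) rho e :=
  [/\ rtree S rho e, non_crossing p e & forall x, x \in S -> deg e x = d x].

Definition realizable S d := forall rho, rho \in S -> exists e, good S d rho e.

Lemma good_ext S S' d rho e : S =i S' -> good S d rho e -> good S' d rho e.
Proof.
move=> eS [T N D]; split => //; first exact: rtree_ext eS T.
by move=> x; rewrite -eS; apply: D.
Qed.

Lemma glue1 S1 S2 c d1 d2 d : realizable S1 d1 -> realizable S2 d2 ->
  c \in S1 -> c \in S2 -> (forall x, x \in S1 -> x \in S2 -> x = c) ->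
  Gsep S1 S2 c \/ Gsep S2 S1 c ->
  (forall x, x \in S1 -> x != c -> d x = d1 x) ->
  (forall x, x \in S2 -> x != c -> d x = d2 x) ->
  d c = (d1 c + d2 c)%N ->
  forall rho, rho \in S1 -> exists e, good (S1 ++ S2) d rho e.
Proof.
move=> R1 R2 cS1 cS2 I12 G D1 D2 Dc rho rS1.
have [e1 [T1 N1 E1]] := R1 rho rS1.
have [e2 [T2 N2 E2]] := R2 c cS2.
exists (fun x y => e1 x y || e2 x y); split.
- exact: rtree_union T1 T2 cS1 I12.
- exact: nc_union T1 T2 N1 N2 G.
have disj : forall x y, ~~ (e1 x y && e2 x y).
  move=> x y; apply/negP => /andP[h1 h2].
  have [xS1 yS1] := rtree_sub T1 h1; have [xS2 yS2] := rtree_sub T2 h2.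
  move: h2; rewrite (I12 x xS1 xS2) (I12 y yS1 yS2).
  by rewrite (rtree_irr T2).
move=> x xS; rewrite deg_union //.
have [/eqP ->|xc] := boolP (x == c); first by rewrite E1 // E2.
move: xS; rewrite mem_cat => /orP[xS1|xS2].
  rewrite E1 // D1 // (@deg_zero _ e2) ?addn0 // => y; apply/negP => h2.
  have [xS2 _] := rtree_sub T2 h2.
  by move: xc; rewrite (I12 x xS1 xS2) eqxx.
rewrite E2 // D2 // (@deg_zero _ e1) // => y; apply/negP => h1.
have [xS1 _] := rtree_sub T1 h1.
by move: xc; rewrite (I12 x xS1 xS2) eqxx.
Qed.

Lemma glue S1 S2 c d1 d2 d : realizable S1 d1 -> realizable S2 d2 ->
  c \in S1 -> c \in S2 -> (forall x, x \in S1 -> x \in S2 -> x = c) ->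
  Gsep S1 S2 c \/ Gsep S2 S1 c ->
  (forall x, x \in S1 -> x != c -> d x = d1 x) ->
  (forall x, x \in S2 -> x != c -> d x = d2 x) ->
  d c = (d1 c + d2 c)%N ->
  realizable (S1 ++ S2) d.
Proof.
move=> R1 R2 cS1 cS2 I12 G D1 D2 Dc rho; rewrite mem_cat => /orP[rS1|rS2].
  exact: glue1 R1 R2 cS1 cS2 I12 G D1 D2 Dc rho rS1.
have I21 : forall x, x \in S2 -> x \in S1 -> x = c by move=> x h1 h2; apply: I12.
have G' : Gsep S2 S1 c \/ Gsep S1 S2 c by case: G; [right|left].
have Dc' : d c = (d2 c + d1 c)%N by rewrite addnC.
have [e Ge] := glue1 R2 R1 cS2 cS1 I21 G' D2 D1 Dc' rS2.
by exists e; apply: good_ext Ge => x; rewrite !mem_cat orbC.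
Qed.

Lemma base a b : a != b -> realizable [:: a; b] (fun _ => 1%N).
Proof.
move=> ab rho rS.
pose par := fun x : 'I_n => if x == a then b else a.
pose dep := fun x : 'I_n => if x == rho then 0%N else 1%N.
have ba : b != a by rewrite eq_sym.
have Ee : forall x y, tedge [:: a; b] rho par x y =
    [&& x \in [:: a; b], y \in [:: a; b] & x != y].
  move=> x y; rewrite /tedge /par.
  case xS: (x \in [:: a; b]) => //=; case yS: (y \in [:: a; b]) => //=.
  move: xS yS rS; rewrite !inE; clear dep.
  do 2 (case/orP => /eqP ->); case/orP => /eqP rE; rewrite ?rE;
  by do 3 rewrite ?eqxx ?(negbTE ab) ?(negbTE ba) /=.
have T : rtree [:: a; b] rho (tedge [:: a; b] rho par).
  split => //; exists par, dep; split => // x xS xr; split.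
    by rewrite /par; case: (x == a); rewrite !inE eqxx ?orbT.
  rewrite /dep (negbTE xr); move: xS xr rS; rewrite /par !inE.
  case/orP => /eqP -> xr; case/orP => /eqP rE; rewrite rE in xr *;
  by do 3 rewrite ?eqxx ?(negbTE ab) ?(negbTE ba) /= in xr *.
exists (tedge [:: a; b] rho par); split => //.
  move=> x y u v; rewrite !Ee => /and3P[xS yS xy] /and3P[uS vS uv] neq.
  exfalso; apply: neq; move: xS yS uS vS xy uv; rewrite !inE.
  by do 4 (case/orP => /eqP ->); rewrite ?eqxx ?(negbTE ab) ?(negbTE ba) //; auto.
move=> x xS; rewrite /deg.
have -> : [set y | tedge [:: a; b] rho par x y] = [set (if x == a then b else a)].
  apply/setP => y; rewrite !inE Ee xS /=.
  rewrite !inE.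
  move: xS; rewrite !inE => /orP[]/eqP ->;
  (have [->|ya] := eqVneq y a); (try have [->|yb] := eqVneq y b);
  by do 3 rewrite ?eqxx ?(negbTE ab) ?(negbTE ba) ?(negbTE ya) ?(negbTE yb) /=.
by rewrite cards1.
Qed.


Lemma lexlt_trans (a b c : R * R) : lexlt a b -> lexlt b c -> lexlt a c.
Proof.
rewrite /lexlt; case: a b c => [a1 a2] [b1 b2] [c1 c2] /=.
case/orP=> [H1|/andP[/eqP H1 H1']]; case/orP=> [H2|/andP[/eqP H2 H2']].
- by rewrite (lt_trans H1 H2).
- by rewrite -H2 H1.
- by rewrite H1 H2.
- by rewrite H1 H2 eqxx (lt_trans H1' H2') orbT.
Qed.

Lemma lexlt_total (a b : R * R) : a != b -> lexlt a b || lexlt b a.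
Proof.
rewrite /lexlt; case: a b => [a1 a2] [b1 b2] /= ab.
case: (ltgtP a1 b1) => //= E; rewrite ?E ?eqxx /=.
case: (ltgtP a2 b2) => //= E'.
by move: ab; rewrite E E' eqxx.
Qed.

Lemma lexmin (S : seq 'I_n) : S != [::] ->
  exists h : 'I_n, h \in S /\ forall q, q \in S -> q != h -> lexlt (p h) (p q).
Proof.
elim: S => // a S IH _.
case: S IH => [|b S] IH.
  by exists a; split; rewrite ?inE ?eqxx // => q; rewrite inE => ->.
case: IH => // h [hS hmin].
case Hah: (lexlt (p a) (p h)).
  exists a; split; first by rewrite inE eqxx.
  move=> q; rewrite in_cons => /orP[/eqP->|qS]; first by rewrite eqxx.
  move=> qa; have [/eqP->|qh] := boolP (q == h) => //.
  exact: lexlt_trans Hah (hmin q qS qh).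
exists h; split; first by rewrite in_cons hS orbT.
move=> q; rewrite in_cons => /orP[/eqP->|qS]; last exact: hmin.
move=> ah; have : p a != p h by apply/eqP => /p_inj /eqP; rewrite (negbTE ah).
by move/lexlt_total; rewrite Hah.
Qed.

Lemma angsort (S : seq 'I_n) (h : 'I_n) : uniq S -> h \in S ->
  (forall q, q \in S -> q != h -> lexlt (p h) (p q)) ->
  exists t : seq 'I_n, [/\ uniq (h :: t), perm_eq S (h :: t) &
    forall i j, (i < j)%N -> (j < size t)%N ->
      0 < orient (p h) (p (nth h t i)) (p (nth h t j))].
Proof.
move=> uS hS hmin.
pose le := fun a b : 'I_n => 0 <= orient (p h) (p a) (p b).
have tot : total le.
  move=> a b; rewrite /le orient_swap oppr_ge0.
  by rewrite orbC le_total.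
pose t := sort le (rem h S).
have pS : perm_eq S (h :: t).
  apply: perm_trans (perm_to_rem hS) _.
  by rewrite perm_cons perm_sym; apply/permPl; apply: perm_sort.
have ut : uniq (h :: t) by rewrite -(perm_uniq pS).
exists t; split => //.
have memt : forall x, x \in t -> x \in S /\ x != h.
  move=> x xt; have xS : x \in S by rewrite (perm_mem pS) in_cons xt orbT.
  split => //; apply/eqP => xh; move: ut; rewrite /= -xh xt //.
have key : forall a b, a \in t -> b \in t -> a != b -> orient (p h) (p a) (p b) != 0.
  move=> a b /memt [aS ah] /memt [bS bh] ab.
  by apply: orient_nz; rewrite // eq_sym.
have tr : {in mem t & &, transitive le}.
  move=> b a c bt at' ct; rewrite /le => Hab Hbc.
  have [/eqP ac|ac] := boolP (a == c).
    have -> : orient (p h) (p a) (p c) = 0 by rewrite ac /orient; ring.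
    by [].
  have [/eqP ab|ab] := boolP (a == b); first by rewrite ab.
  have [/eqP bc|bc] := boolP (b == c); first by rewrite -bc.
  have [aS ah] := memt a at'; have [bS bh] := memt b bt; have [cS ch] := memt c ct.
  apply: ltW; apply: (@orient_trans _ (p h) (p a) (p b) (p c)).
  - exact: hmin.
  - exact: hmin.
  - exact: hmin.
  - by rewrite lt_def key.
  - by rewrite lt_def key.
have st : sorted le t by apply: sort_sorted.
move=> i j ij jt.
have it : (i < size t)%N by apply: ltn_trans ij jt.
have := @sorted_ltn_nth_in _ (mem t) le tr h t (allss t) st i j.
rewrite !inE => /(_ it jt ij) Hle.
rewrite lt_def; apply/andP; split => //.
apply: key; rewrite ?mem_nth //.
rewrite nth_uniq //; first by rewrite neq_ltn ij.
by case/andP: ut.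
Qed.
Lemma realizable_ext S S' d : S =i S' -> realizable S d -> realizable S' d.
Proof.
move=> eS RS rho; rewrite -eS => /RS [e Ge]; exists e; exact: good_ext Ge.
Qed.

Definition IHsz (N : nat) := forall S' : seq 'I_n, uniq S' -> (size S' <= N)%N -> (2 <= size S')%N ->
  forall d' : 'I_n -> nat, (forall x, x \in S' -> 0 < d' x)%N ->
  (\sum_(x <- S') d' x = 2 * size S' - 2)%N -> realizable S' d'.

Lemma sides h t X r Y s : t = X ++ r :: Y ->
  (forall i j, (i < j)%N -> (j < size t)%N ->
     0 < s * orient (p h) (p (nth h t i)) (p (nth h t j))) ->
  (forall x, x \in X -> 0 < s * orient (p h) (p x) (p r)) /\
  (forall y, y \in Y -> 0 < s * orient (p h) (p r) (p y)).
Proof.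
move=> Et H; split.
  move=> x /(nthP h) [j jX <-].
  have := H j (size X) jX; rewrite Et size_cat /= addnS ltnS leq_addr.
  by rewrite !nth_cat jX ltnn subnn /=; apply.
move=> y /(nthP h) [j jY <-].
have := H (size X) (size X + j.+1)%N; rewrite Et size_cat /= ltn_add2l.
rewrite !nth_cat ltnn subnn /=.
have -> : (size X + j.+1 < size X)%N = false by rewrite ltnNge leq_addr.
rewrite addKn /=.
by apply; rewrite ?ltnS // -{1}(addn0 (size X)) ltn_add2l.
Qed.

Lemma gsepXY h X r Y s c :
  (forall x, x \in X -> 0 < s * orient (p h) (p x) (p r)) ->
  (forall y, y \in Y -> 0 < s * orient (p h) (p r) (p y)) ->
  c = h \/ c = r ->
  Gsep (h :: r :: X) (c :: Y) c.
Proof.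
move=> HX HY hc; exists s, (p h), (p r); split.
- move=> x; rewrite !in_cons => /orP[/eqP->|/orP[/eqP->|xX]].
  + by rewrite /aff orient_xx1 mulr0.
  + by rewrite /aff orient_xx2 mulr0.
  + by rewrite /aff orient_swap mulrN oppr_le0; apply/ltW/HX.
- move=> x; rewrite in_cons => /orP[/eqP->|xY]; last exact/ltW/HY.
  by case: hc => ->; rewrite /aff ?orient_xx1 ?orient_xx2 mulr0.
- move=> x; rewrite in_cons => /orP[/eqP-> //|xY].
  by move=> E; have := HY x xY; rewrite /aff in E; rewrite E ltxx.
Qed.
Lemma uniq_split (h : 'I_n) X r Y : uniq (h :: X ++ r :: Y) ->
  [/\ h \notin X ++ r :: Y, uniq X, uniq Y, r \notin X & r \notin Y] /\
      (forall x, x \in X -> x \in r :: Y -> False).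
Proof.
rewrite [uniq _]/= => /andP[hn]; rewrite cat_uniq => /and3P[uX nh /andP[rY uY]].
split; first split => //.
  by apply/negP => rX; move/negP: nh; apply; apply/hasP; exists r; rewrite ?inE ?eqxx.
by move=> x xX xY; move/negP: nh; apply; apply/hasP; exists x.
Qed.

Lemma constrA (h : 'I_n) (X : seq 'I_n) (r : 'I_n) (Y : seq 'I_n) (s : R) (d : 'I_n -> nat) :
  IHsz (size X + size Y + 1) ->
  uniq (h :: X ++ r :: Y) ->
  (forall x, x \in X -> 0 < s * orient (p h) (p x) (p r)) ->
  (forall y, y \in Y -> 0 < s * orient (p h) (p r) (p y)) ->
  d h = 1%N ->
  (forall x, x \in X ++ r :: Y -> 0 < d x)%N ->
  Y != [::] ->
  (\sum_(x <- X) d x <= 2 * size X)%N ->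
  (2 * (size X).+1 <= \sum_(x <- X) d x + d r)%N ->
  (\sum_(x <- X) d x + d r + \sum_(x <- Y) d x + 1 = 2 * (size X + size Y).+1)%N ->
  realizable (h :: X ++ r :: Y) d.
Proof.
move=> IH U HX HY dh pos Yn H1 H2 Htot.
have [[hn uX uY rX rY] dXY] := uniq_split U.
have hr : h != r by apply/eqP => hr; move: hn; rewrite hr mem_cat inE eqxx orbT.
have hX : h \notin X by apply/negP => hX; move: hn; rewrite mem_cat hX.
have hY : h \notin Y by apply/negP => hY; move: hn; rewrite mem_cat inE hY !orbT.
have sY : (0 < size Y)%N by rewrite lt0n size_eq0.
set DX := (\sum_(x <- X) d x)%N in H1 H2 Htot.
set DY := (\sum_(x <- Y) d x)%N in Htot.
pose d1 := fun x => if x == r then (2 * size X + 1 - DX)%N else d x.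
pose d2 := fun x => if x == r then (DX + d r - 2 * size X - 1)%N else d x.
have posX : forall x, x \in X -> (0 < d x)%N by move=> x xX; apply: pos; rewrite mem_cat xX.
have posY : forall x, x \in Y -> (0 < d x)%N.
  by move=> x xY; apply: pos; rewrite mem_cat inE xY !orbT.
have R1 : realizable (h :: r :: X) d1.
  apply: IH => /=.
  - by rewrite in_cons negb_or hr hX rX uX.
  - clear -H1 H2 Htot sY; lia.
  - by [].
  - move=> x; rewrite !in_cons => /orP[/eqP->|/orP[/eqP->|xX]].
    + by rewrite /d1 (negbTE hr) dh.
    + by rewrite /d1 eqxx; clear -H1 H2 Htot sY; lia.
    + have xr : x != r by apply/eqP => xr; move: rX; rewrite -xr xX.
      by rewrite /d1 (negbTE xr); apply: posX.
  - rewrite !big_cons.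
    have -> : (\sum_(x <- X) d1 x)%N = DX.
      apply: eq_big_seq => x xX.
      have xr : x != r by apply/eqP => xr; move: rX; rewrite -xr xX.
      by rewrite /d1 (negbTE xr).
    rewrite /d1 (negbTE hr) eqxx dh; clear -H1 H2 Htot sY; lia.
have R2 : realizable (r :: Y) d2.
  apply: IH => /=.
  - by rewrite rY uY.
  - clear -H1 H2 Htot sY; lia.
  - clear -H1 H2 Htot sY; lia.
  - move=> x; rewrite !in_cons => /orP[/eqP->|xY].
    + by rewrite /d2 eqxx; clear -H1 H2 Htot sY; lia.
    + have xr : x != r by apply/eqP => xr; move: rY; rewrite -xr xY.
      by rewrite /d2 (negbTE xr); apply: posY.
  - rewrite !big_cons.
    have -> : (\sum_(x <- Y) d2 x)%N = DY.
      apply: eq_big_seq => x xY.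
      have xr : x != r by apply/eqP => xr; move: rY; rewrite -xr xY.
      by rewrite /d2 (negbTE xr).
    rewrite /d2 eqxx; clear -H1 H2 Htot sY; lia.
have G := gsepXY HX HY (or_intror erefl).
have RR : realizable ((h :: r :: X) ++ (r :: Y)) d.
  apply: (glue R1 R2 (c := r)).
- by rewrite !inE eqxx orbT.
- by rewrite inE eqxx.
- move=> x; rewrite !in_cons => /orP[/eqP->|/orP[/eqP-> //|xX]].
    by rewrite (negbTE hr) (negbTE hY).
  by move=> /orP[/eqP-> //|xY]; exfalso; apply: (dXY x xX); rewrite inE xY orbT.
- by left.
- by move=> x _ xr; rewrite /d1 (negbTE xr).
- by move=> x _ xr; rewrite /d2 (negbTE xr).
- rewrite /d1 /d2 eqxx; clear -H1 H2 Htot sY; lia.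
apply: realizable_ext RR => x; rewrite !(in_cons, mem_cat).
by case: (x == h); case: (x == r); case: (x \in X); case: (x \in Y).
Qed.

Lemma constrB (h : 'I_n) (X : seq 'I_n) (y : 'I_n) (Y : seq 'I_n) (s : R) (d : 'I_n -> nat) :
  IHsz (size X + size Y + 1) ->
  uniq (h :: X ++ y :: Y) ->
  (forall x, x \in X -> 0 < s * orient (p h) (p x) (p y)) ->
  (forall z, z \in Y -> 0 < s * orient (p h) (p y) (p z)) ->
  (2 <= d h)%N ->
  (forall x, x \in X ++ y :: Y -> 0 < d x)%N ->
  Y != [::] ->
  (\sum_(x <- X) d x + d y + 1 = 2 * (size X).+1)%N ->
  (d h + (\sum_(x <- X) d x + d y + \sum_(x <- Y) d x) = 2 * (size X + size Y).+1)%N ->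
  realizable (h :: X ++ y :: Y) d.
Proof.
move=> IH U HX HY dh pos Yn H1 Htot.
have [[hn uX uY yX yY] dXY] := uniq_split U.
have hy : h != y by apply/eqP => hy; move: hn; rewrite hy mem_cat inE eqxx orbT.
have hX : h \notin X by apply/negP => hX; move: hn; rewrite mem_cat hX.
have hY : h \notin Y by apply/negP => hY; move: hn; rewrite mem_cat inE hY !orbT.
have sY : (0 < size Y)%N by rewrite lt0n size_eq0.
set DX := (\sum_(x <- X) d x)%N in H1 Htot.
set DY := (\sum_(x <- Y) d x)%N in Htot.
pose d1 := fun x => if x == h then 1%N else d x.
pose d2 := fun x => if x == h then (d h - 1)%N else d x.
have posX : forall x, x \in X -> (0 < d x)%N by move=> x xX; apply: pos; rewrite mem_cat xX.
have posY : forall x, x \in Y -> (0 < d x)%N.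
  by move=> x xY; apply: pos; rewrite mem_cat inE xY !orbT.
have posy : (0 < d y)%N by apply: pos; rewrite mem_cat inE eqxx orbT.
have R1 : realizable (h :: y :: X) d1.
  apply: IH => /=.
  - by rewrite in_cons negb_or hy hX yX uX.
  - clear -H1 Htot sY dh; lia.
  - by [].
  - move=> x; rewrite !in_cons => /orP[/eqP->|/orP[/eqP->|xX]].
    + by rewrite /d1 eqxx.
    + by rewrite /d1 eq_sym (negbTE hy).
    + have xh : x != h by apply/eqP => xh; move: hX; rewrite -xh xX.
      by rewrite /d1 (negbTE xh); apply: posX.
  - rewrite !big_cons.
    have -> : (\sum_(x <- X) d1 x)%N = DX.
      apply: eq_big_seq => x xX.
      have xh : x != h by apply/eqP => xh; move: hX; rewrite -xh xX.
      by rewrite /d1 (negbTE xh).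
    rewrite /d1 eqxx eq_sym (negbTE hy); clear -H1 Htot sY dh; lia.
have R2 : realizable (h :: Y) d2.
  apply: IH => /=.
  - by rewrite hY uY.
  - clear -H1 Htot sY dh; lia.
  - clear -H1 Htot sY dh; lia.
  - move=> x; rewrite !in_cons => /orP[/eqP->|xY].
    + by rewrite /d2 eqxx; clear -H1 Htot sY dh; lia.
    + have xh : x != h by apply/eqP => xh; move: hY; rewrite -xh xY.
      by rewrite /d2 (negbTE xh); apply: posY.
  - rewrite !big_cons.
    have -> : (\sum_(x <- Y) d2 x)%N = DY.
      apply: eq_big_seq => x xY.
      have xh : x != h by apply/eqP => xh; move: hY; rewrite -xh xY.
      by rewrite /d2 (negbTE xh).
    rewrite /d2 eqxx; clear -H1 Htot sY dh; lia.
have G := gsepXY HX HY (or_introl erefl).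
have RR : realizable ((h :: y :: X) ++ (h :: Y)) d.
  apply: (glue R1 R2 (c := h)).
- by rewrite !inE eqxx.
- by rewrite inE eqxx.
- move=> x; rewrite !in_cons => /orP[/eqP-> //|/orP[/eqP->|xX]].
    by rewrite eq_sym (negbTE hy) (negbTE yY).
  by move=> /orP[/eqP-> //|xY]; exfalso; apply: (dXY x xX); rewrite inE xY orbT.
- by left.
- by move=> x _ xr; rewrite /d1 (negbTE xr).
- by move=> x _ xr; rewrite /d2 (negbTE xr).
- rewrite /d1 /d2 eqxx; clear -H1 Htot sY dh; lia.
apply: realizable_ext RR => x; rewrite !(in_cons, mem_cat).
by case: (x == h); case: (x == y); case: (x \in X); case: (x \in Y).
Qed.
Lemma IHsz_mono M N : (M <= N)%N -> IHsz N -> IHsz M.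
Proof. by move=> MN IH S' uS sS; apply: IH uS (leq_trans sS MN). Qed.

Lemma realizable_deq S d d' : (forall x, x \in S -> d x = d' x) ->
  realizable S d -> realizable S d'.
Proof.
move=> E RS rho rS; have [e [T N D]] := RS rho rS; exists e; split => // x xS.
by rewrite D // E.
Qed.

Lemma main_step N : IHsz N -> IHsz N.+1.
Proof.
move=> IH S uS sS s2 d pos Hsum.
case: (leqP (size S) N) => sN; first exact: IH.
have eS : size S = N.+1 by apply/eqP; rewrite eqn_leq sS sN.
case: (ltngtP (size S) 2) => [|S3|S2]; first by rewrite ltnNge s2.
  2: {
  case: S uS sS s2 pos Hsum eS sN S2 => [|a [|b [|c S']]] // uS _ _ pos Hsum _ _ _.
  have ab : a != b by move: uS => /=; rewrite inE andbT.
  have pa := pos a (mem_head _ _).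
  have pb : (0 < d b)%N by apply: pos; rewrite !inE eqxx orbT.
  move: Hsum; rewrite !big_cons big_nil addn0 /= => Hsum.
  apply: realizable_deq (base ab) => x; rewrite !inE => /orP[]/eqP->; clear -Hsum pa pb; lia. }
have Sn : S != [::] by rewrite -size_eq0 eS.
have [h [hS hmin]] := lexmin Sn.
have [t [ut pS pw]] := angsort uS hS hmin.
have st : size t = N by have := perm_size pS; rewrite eS /= => [[]].
have sumS : (\sum_(x <- S) d x = d h + \sum_(x <- t) d x)%N.
  by rewrite (perm_big _ pS) big_cons.
have memS : S =i h :: t := perm_mem pS.
have post : forall x, x \in t -> (0 < d x)%N.
  by move=> x xt; apply: pos; rewrite memS in_cons xt orbT.
apply: (@realizable_ext (h :: t)); first by move=> x; rewrite memS.
have dh0 := pos h hS.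
have Dt : (Dp d t (size t) = \sum_(x <- t) d x)%N by rewrite /Dp take_size.
have hnt : h \notin t by case/andP: ut.
have uT : uniq t by case/andP: ut.
case: (leqP 2 (d h)) => dh.
- have Hm : (Dp d t (size t) + 2 <= 2 * size t)%N by rewrite Dt; clear -Hsum sumS eS st dh; lia.
  have [i [i0 im Hi]] := split_ge2 h post Hm.
  case: i i0 im Hi => // j _ jm0 Hj.
  have jm : (j.+1 < size t)%N := jm0.
  have jt : (j < size t)%N by apply: ltn_trans (ltnSn j) jm.
  have Et : t = take j t ++ nth h t j :: drop j.+1 t by rewrite -drop_nth // cat_take_drop.
  have sX : size (take j t) = j by rewrite size_takel // ltnW.
  have sY : size (drop j.+1 t) = (size t - j.+1)%N by rewrite size_drop.
  have pw1 : forall i j, (i < j)%N -> (j < size t)%N ->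
      0 < 1 * orient (p h) (p (nth h t i)) (p (nth h t j)).
    by move=> ? ? ? ?; rewrite mul1r; apply: pw.
  have [HX HY] := sides Et pw1.
  have DX : (Dp d t j = \sum_(x <- take j t) d x)%N by [].
  have DS := @DpS _ d _ _ h jt.
  have Stot : (\sum_(x <- t) d x =
     \sum_(x <- take j t) d x + (d (nth h t j) + \sum_(x <- drop j.+1 t) d x))%N.
    by rewrite {1}Et big_cat big_cons.
  rewrite {1}Et; apply: (constrB (s := 1)) => //.
  + by apply: IHsz_mono IH; rewrite sX sY; clear -st jm; lia.
  + by rewrite -Et.
  + by rewrite -Et.
  + by rewrite -size_eq0 sY subn_eq0 -ltnNge.
  + by rewrite sX -Hj DS.
  + by rewrite sX sY; clear -Stot sumS Hsum eS st jm; lia.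
have dh1 : d h = 1%N by clear -dh dh0; lia.
have s2t : (2 <= size t)%N by rewrite st; clear -S3 eS; lia.
have Hm : (Dp d t (size t) + 1 = 2 * size t)%N by rewrite Dt; clear -Hsum sumS eS st dh1; lia.
have [[i [im0 Hi1 Hi2]]|Hl] := split_eq1 h post s2t Hm.
- have im : (i.+1 < size t)%N := im0.
  have it : (i < size t)%N by apply: ltn_trans (ltnSn i) im.
  have Et : t = take i t ++ nth h t i :: drop i.+1 t by rewrite -drop_nth // cat_take_drop.
  have sX : size (take i t) = i by rewrite size_takel // ltnW.
  have sY : size (drop i.+1 t) = (size t - i.+1)%N by rewrite size_drop.
  have pw1 : forall i j, (i < j)%N -> (j < size t)%N ->
      0 < 1 * orient (p h) (p (nth h t i)) (p (nth h t j)).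
    by move=> ? ? ? ?; rewrite mul1r; apply: pw.
  have [HX HY] := sides Et pw1.
  have DX : (Dp d t i = \sum_(x <- take i t) d x)%N by [].
  have DS := @DpS _ d _ _ h it.
  have Stot : (\sum_(x <- t) d x =
     \sum_(x <- take i t) d x + (d (nth h t i) + \sum_(x <- drop i.+1 t) d x))%N.
    have E2 : (\sum_(x <- t) d x =
       \sum_(x <- take i t ++ nth h t i :: drop i.+1 t) d x)%N by rewrite -Et.
    by rewrite E2 big_cat big_cons.
  rewrite {1}Et; apply: (constrA (s := 1)) => //.
  + by apply: IHsz_mono IH; rewrite sX sY; clear -st im; lia.
  + by rewrite -Et.
  + by rewrite -Et.
  + by rewrite -size_eq0 sY subn_eq0 -ltnNge.
  + by rewrite sX; exact: Hi1.
  + by rewrite sX; apply: leq_trans Hi2 _; rewrite DS; apply: eq_leq.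
  + by rewrite sX sY; clear -Stot sumS Hsum eS st im dh1; lia.
- set t' := rev t.
  have st' : size t' = size t by rewrite size_rev.
  have t0 : (0 < size t')%N by rewrite st'; clear -s2t; lia.
  have Et : t' = [::] ++ nth h t' 0 :: drop 1 t' by rewrite /= -drop_nth // drop0.
  have sY : size (drop 1 t') = (size t - 1)%N by rewrite size_drop st'.
  have pw' : forall i j, (i < j)%N -> (j < size t')%N ->
      0 < -1 * orient (p h) (p (nth h t' i)) (p (nth h t' j)).
    move=> i j ij jt; rewrite st' in jt.
    have it : (i < size t)%N by apply: ltn_trans ij jt.
    rewrite /t' !nth_rev // mulN1r -orient_swap; apply: pw.
      by clear -ij jt; lia.
    by clear -it; lia.
  have [HX HY] := sides Et pw'.
  have Stot : (\sum_(x <- t) d x = d (nth h t' 0) + \sum_(x <- drop 1 t') d x)%N.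
    by rewrite -(big_rev _ t) -/t' {1}Et /= big_cons.
  have dr : d (nth h t' 0) = d (nth h t (size t).-1).
    have t0' : (0 < size t)%N by clear -s2t; lia.
    by rewrite /t' nth_rev // subn1.
  apply: (@realizable_ext (h :: [::] ++ nth h t' 0 :: drop 1 t')).
    by move=> x; rewrite -Et /t' !in_cons mem_rev.
  apply: (constrA (s := -1)) => //.
  + by apply: IHsz_mono IH; rewrite sY /=; clear -st s2t; lia.
  + by rewrite -Et /t' /= mem_rev hnt rev_uniq.
  + by rewrite -Et /t' => x; rewrite mem_rev; apply: post.
  + by rewrite -size_eq0 sY; clear -s2t; lia.
  + by rewrite big_nil.
  + by rewrite big_nil /= add0n dr.
  + by rewrite big_nil /= sY add0n; clear -Stot sumS Hsum eS st s2t dh1; lia.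
Qed.

Lemma main N : IHsz N.
Proof.
elim: N => [|N IH]; last exact: main_step.
by move=> S' _ s0 s2; move: (leq_trans s2 s0).
Qed.
End Main.

Close Scope ring_scope.

Theorem corollary2 (R : realType) (k n : nat) (p : 'I_n -> R * R)
    (red : 'I_n -> bool) :
  (2 <= k)%N ->
  injective p ->
  no_three_collinear p ->
  (2 <= #|[set x | ~~ red x]|)%N ->
  (#|[set x | ~~ red x]| <= (k - 2) * #|[set x | red x]| + 2)%N ->
  exists e : rel 'I_n,
    [/\ is_tree e, non_crossing p e,
        (forall x, (deg e x == 1)%N = ~~ red x),
        (forall x, (deg e x <= k)%N)
      & (#|[set x | ~~ red x]| = (k - 2) * #|[set x | red x]| + 2)%N ->
        forall x, red x -> deg e x = k].
Proof.
move=> k2 pinj pgen B2 Ble.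
set A := [set x | red x] in Ble *.
set Bs := [set x | ~~ red x] in B2 Ble *.
have cardAB : #|A| + #|Bs| = n.
  have -> : Bs = ~: A by apply/setP => x; rewrite !inE.
  by rewrite cardsC card_ord.
have HE : #|Bs| - 2 <= (k - 2) * size (enum A) by rewrite -cardE; lia.
have [g [gc gs]] := fill (enum_uniq (mem A)) HE.
pose d := fun x => if red x then 2 + g x else 1.
have n2 : 2 <= n by lia.
have x0 : 'I_n := Ordinal (leq_trans (isT : 0 < 2) n2).
have sA : \sum_(x | red x) g x = #|Bs| - 2.
  by rewrite -gs big_enum; apply: eq_bigl => x; rewrite inE.
have Hs : \sum_(x <- enum 'I_n) d x = 2 * size (enum 'I_n) - 2.
  rewrite size_enum_ord big_enum /= (bigID red) /=.
  have E1 : \sum_(i | red i) d i = \sum_(i | red i) (2 + g i).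
    by apply: eq_bigr => x rx; rewrite /d rx.
  have E2 : \sum_(i | ~~ red i) d i = \sum_(i | ~~ red i) 1.
    by apply: eq_bigr => x rx; rewrite /d (negbTE rx).
  rewrite E1 E2 big_split /= sA !sum_nat_const.
  have -> : #|red| = #|A| by apply: eq_card => x; rewrite inE.
  have -> : #|(fun i => ~~ red i)| = #|Bs| by apply: eq_card => x; rewrite inE.
  lia.
have pos : forall x, x \in enum 'I_n -> 0 < d x by move=> x _; rewrite /d; case: (red x).
have s2 : 2 <= size (enum 'I_n) by rewrite size_enum_ord.
have Rz := main pinj pgen (enum_uniq _) (leqnn _) s2 pos Hs.
have [e [T NC D]] := Rz x0 (mem_enum _ x0).
have De : forall x, deg e x = d x by move=> x; apply: D; rewrite mem_enum.
exists e; split => //.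
- by apply: (rtree_is_tree T) => x; rewrite mem_enum.
- move=> x; rewrite De /d; case: (red x) => //=.
- move=> x; rewrite De /d; case: (red x); last by lia.
  by have := gc x; lia.
move=> HB x rx.
have full : \sum_(x <- enum A) g x = (k - 2) * size (enum A) by rewrite gs -cardE; lia.
have gx := fill_full gc full (_ : x \in enum A).
rewrite De /d rx gx; [lia | by rewrite mem_enum inE].
Qed.
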